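(* Let $1\le r\le m$ and assume $\lambda_r>0$ and $\widehat\lambda_r>0$. Then $$\|\widehat K_r-K_r\|_F\le\sqrt{\lambda_1N}\,\|\Delta H\|_2\le N\|\Delta H\|_2.$$
   Context: Let $\mathcal X$ be a set and $\kappa:\mathcal X\times\mathcal X\to\mathbb R$ a positive semidefinite kernel with $\kappa(\mathbf x,\mathbf x)\le 1$ for all $\mathbf x$. Let $\mathcal H_\kappa$ be its RKHS, with inner product $\langle\cdot,\cdot\rangle$. Let $\mathcal D=\{\mathbf x_1,\ldots,\mathbf x_N\}\subset\mathcal X$ and $K=[\kappa(\mathbf x_i,\mathbf x_j)]_{N\times N}$. Assume $K$ is positive definite, with eigenvalues $\lambda_1\ge\cdots\ge\lambda_N>0$ and orthonormal eigenvectors $\mathbf v_i$. Put $V_{i,j}=[(\mathbf v_1,\ldots,\mathbf v_N)]_{i,j}$ and $K_r=\sum_{i=1}^r\lambda_i\mathbf v_i\mathbf v_i^\top$. Let $\widehat{\mathbf x}_1,\ldots,\widehat{\mathbf x}_m$ be points sampled uniformly from $\mathcal D$. Let $\widehat K=[\kappa(\widehat{\mathbf x}_i,\widehat{\mathbf x}_j)]_{m\times m}$, with eigenvalues $\widehat\lambda_1\ge\cdots\ge\widehat\lambda_m$ and orthonormal eigenvectors $\mathbf u_i$. Put $U_{i,j}=[(\mathbf u_1,\ldots,\mathbf u_r)]_{i,j}$. Define $$\widehat W=\sum_{i=1}^r\widehat\lambda_i^{-1}\mathbf u_i\mathbf u_i^\top,\qquad K_b=[\kappa(\mathbf x_i,\widehat{\mathbf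 x}_j)]_{N\times m},\qquad \widehat K_r=K_b\widehat WK_b^\top.$$ Define $$\varphi_j=\lambda_j^{-1/2}\sum_{i=1}^N V_{i,j}\kappa(\mathbf x_i,\cdot)\quad(j\in[N]),\qquad \widehat\varphi_j=\widehat\lambda_j^{-1/2}\sum_{i=1}^m U_{i,j}\kappa(\widehat{\mathbf x}_i,\cdot)\quad(j\le r).$$ Define $H_r[f]=\sum_{i=1}^r\varphi_i\langle\varphi_i,f\rangle$, $\widehat H_r[f]=\sum_{i=1}^r\widehat\varphi_i\langle\widehat\varphi_i,f\rangle$, and $\Delta H=H_r-\widehat H_r$. Here $\|\cdot\|_2$ denotes the operator (spectral) norm on $\mathcal H_\kappa$, and $\|\cdot\|_F$ the Frobenius norm. *)

(* Defs.v *)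
From HB Require Import structures.
From mathcomp Require Import all_boot all_order all_algebra.
Set Implicit Arguments. Unset Strict Implicit. Unset Printing Implicit Defensive.
Import Order.TTheory GRing.Theory Num.Theory.
Local Open Scope ring_scope.

Section Defs.
Variable R : rcfType.

Definition psd_kernel (X : Type) (kappa : X -> X -> R) : Prop :=
  (forall x y, kappa x y = kappa y x) /\
  (forall (n : nat) (xs : 'I_n -> X) (c : 'I_n -> R),
      0 <= \sum_(i < n) \sum_(j < n) c i * c j * kappa (xs i) (xs j)).

Definition inner_product (V : lmodType R) (ip : V -> V -> R) : Prop :=
  [/\ forall u v, ip u v = ip v u,
      forall a u v w, ip (a *: u + v) w = a * ip u w + ip v w,
      forall u, 0 <= ip u u
    & forall u, ip u u = 0 -> u = 0].

Definition ipnorm (V : lmodType R) (ip : V -> V -> R) (f : V) : R :=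
  Num.sqrt (ip f f).

(* Feature space of kappa with feature map Phi x = kappa(x, .):
   reproducing property <kappa(x,.), kappa(y,.)> = kappa(x,y). *)
Definition feature_map (X : Type) (kappa : X -> X -> R) (V : lmodType R)
  (ip : V -> V -> R) (Phi : X -> V) : Prop :=
  forall x y, ip (Phi x) (Phi y) = kappa x y.

Definition is_op_norm (V : lmodType R) (ip : V -> V -> R) (T : V -> V) (c : R)
  : Prop :=
  (forall f, ipnorm ip f <= 1 -> ipnorm ip (T f) <= c) /\
  (forall b, (forall f, ipnorm ip f <= 1 -> ipnorm ip (T f) <= b) -> c <= b).

Definition frob_norm (p q : nat) (A : 'M[R]_(p, q)) : R :=
  Num.sqrt (\sum_(i < p) \sum_(j < q) A i j ^+ 2).

Definition gram (X : Type) (kappa : X -> X -> R) (p q : nat)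
  (y : 'I_p -> X) (z : 'I_q -> X) : 'M[R]_(p, q) :=
  \matrix_(i, j) kappa (y i) (z j).

Definition sorted_eigendecomp (n : nat) (A : 'M[R]_n) (lam : nat -> R)
  (E : 'M[R]_n) : Prop :=
  [/\ E^T *m E = 1%:M,
      A *m E = E *m diag_mx (\row_(i < n) lam i)
    & forall i j : nat, (i <= j < n)%N -> lam j <= lam i].

Definition trunc_mx (n r : nat) (lam : nat -> R) (E : 'M[R]_n) : 'M[R]_n :=
  \sum_(i < n | (i < r)%N) lam i *: (col i E *m (col i E)^T).

Definition pinv_trunc (n r : nat) (lam : nat -> R) (E : 'M[R]_n) : 'M[R]_n :=
  \sum_(i < n | (i < r)%N) (lam i)^-1 *: (col i E *m (col i E)^T).

Definition eigfun (V : lmodType R) (X : Type) (Phi : X -> V) (n : nat)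
  (y : 'I_n -> X) (lam : nat -> R) (E : 'M[R]_n) (j : 'I_n) : V :=
  (Num.sqrt (lam j))^-1 *: \sum_(i < n) E i j *: Phi (y i).

Definition proj_op (V : lmodType R) (ip : V -> V -> R) (n r : nat)
  (phi : 'I_n -> V) (f : V) : V :=
  \sum_(i < n | (i < r)%N) ip (phi i) f *: phi i.

End Defs.

(* Main.v *)
Require Import Defs.
From HB Require Import structures.
From mathcomp Require Import all_boot all_order all_algebra.
From mathcomp Require Import ring lra.
Import Order.TTheory GRing.Theory Num.Theory.
Local Open Scope ring_scope.
Set Implicit Arguments. Unset Strict Implicit.

Section IP.
Variables (R : rcfType) (V : lmodType R) (ip : V -> V -> R).
Hypothesis Hip : inner_product ip.

Lemma ipC u v : ip u v = ip v u. Proof. by move: Hip; rewrite /inner_product => -[]. Qed.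
Lemma ipL a u v w : ip (a *: u + v) w = a * ip u w + ip v w.
Proof. by move: Hip; rewrite /inner_product => -[_ H _ _]; apply: H. Qed.
Lemma ipD1 u v w : ip (u + v) w = ip u w + ip v w.
Proof. by have := ipL 1 u v w; rewrite scale1r mul1r. Qed.
Lemma ip01 w : ip 0 w = 0.
Proof.
have h := ipD1 0 0 w; rewrite addr0 in h.
by move: h; rewrite -{1}[ip 0 w]addr0 => /addrI <-.
Qed.
Lemma ipZ1 a u w : ip (a *: u) w = a * ip u w.
Proof. by rewrite -[a *: u]addr0 ipL ip01 addr0. Qed.
Lemma ipN1 u w : ip (- u) w = - ip u w.
Proof. by rewrite -scaleN1r ipZ1 mulN1r. Qed.
Lemma ipB1 u v w : ip (u - v) w = ip u w - ip v w.
Proof. by rewrite ipD1 ipN1. Qed.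
Lemma ipsum1 (I : Type) (s : seq I) (P : pred I) (F : I -> V) w :
  ip (\sum_(i <- s | P i) F i) w = \sum_(i <- s | P i) ip (F i) w.
Proof. by elim/big_rec2: _ => [|i y1 y2 _ <-]; rewrite ?ip01 ?ipD1. Qed.
Lemma ipD2 u v w : ip w (u + v) = ip w u + ip w v.
Proof. by rewrite !(ipC w) ipD1. Qed.
Lemma ipZ2 a u w : ip w (a *: u) = a * ip w u.
Proof. by rewrite !(ipC w) ipZ1. Qed.
Lemma ipB2 u v w : ip w (u - v) = ip w u - ip w v.
Proof. by rewrite !(ipC w) ipB1. Qed.
Lemma ipsum2 (I : Type) (s : seq I) (P : pred I) (F : I -> V) w :
  ip w (\sum_(i <- s | P i) F i) = \sum_(i <- s | P i) ip w (F i).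
Proof. rewrite ipC ipsum1; apply: eq_bigr => i _; exact: ipC. Qed.
Lemma ip_ge0 u : 0 <= ip u u. Proof. by move: Hip; rewrite /inner_product => -[]. Qed.

Lemma CS u v : ip u v ^+ 2 <= ip u u * ip v v.
Proof.
have [v0|vn0] := eqVneq (ip v v) 0.
  by move: Hip; rewrite /inner_product => -[_ _ _ H]; rewrite (H _ v0) ipC !ip01 exprS mul0r mulr0.
have qp : 0 < ip v v by rewrite lt0r vn0 ip_ge0.
have := ip_ge0 (ip v v *: u - ip u v *: v).
rewrite !(ipB1, ipB2, ipZ1, ipZ2) (ipC v u) => h.
have e : ip v v * (ip v v * ip u u) - ip v v * (ip u v * ip u v) -
    (ip u v * (ip v v * ip u v) - ip u v * (ip u v * ip v v)) = ip v v * (ip u u * ip v v - ip u v ^+ 2) by ring.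
by move: h; rewrite e pmulr_rge0 // subr_ge0.
Qed.
End IP.
Section Main.
Variables (R : rcfType) (X : Type) (kappa : X -> X -> R)
  (V : lmodType R) (ip : V -> V -> R) (Phi : X -> V).
Hypothesis Hip : inner_product ip.
Hypothesis HPhi : feature_map kappa ip Phi.

Lemma ip_eig n (y : 'I_n -> X) mu E j v :
  ip (eigfun Phi y mu E j) (Phi v) =
  (Num.sqrt (mu j))^-1 * \sum_i E i j * kappa (y i) v.
Proof.
rewrite /eigfun ipZ1 // ipsum1 //; congr (_ * _); apply: eq_bigr => i _.
by rewrite ipZ1 // HPhi.
Qed.

Lemma proj_ip n (y : 'I_n -> X) (mu : nat -> R) (E : 'M[R]_n) r z w :
  (forall k : 'I_n, (k < r)%N -> 0 <= mu k) ->
  ip (Phi z) (proj_op ip r (eigfun Phi y mu E) (Phi w)) =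
  \sum_(k < n | (k < r)%N) (mu k)^-1 *
     ((\sum_i E i k * kappa (y i) z) * (\sum_i E i k * kappa (y i) w)).
Proof.
move=> Hmu; rewrite /proj_op ipsum2 //; apply: eq_bigr => k Hk.
rewrite ipZ2 // (ipC Hip (Phi z)) !ip_eig.
rewrite -[in RHS](sqr_sqrtr (Hmu k Hk)) expr2 invfM.
set a := (Num.sqrt _)^-1; set A := \sum_i _; set B := \sum_i _.
by ring.
Qed.
End Main.
Section Mx.
Variable R : rcfType.

Lemma sandwich_entry p q (A : 'M[R]_(p, q)) (B : 'M[R]_q) (a : nat -> R) r i j :
  (A *m (\sum_(k < q | (k < r)%N) a k *: (col k B *m (col k B)^T)) *m A^T) i j =
  \sum_(k < q | (k < r)%N) a k * ((\sum_l A i l * B l k) * (\sum_l A j l * B l k)).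
Proof.
rewrite mulmx_sumr mulmx_suml summxE; apply: eq_bigr => k _.
rewrite -scalemxAr -scalemxAl mxE; congr (_ * _).
rewrite !mulmxA -[_ *m A^T]mulmxA -trmx_mul mxE big_ord1 !mxE.
congr (_ * _); apply: eq_bigr => l _; rewrite !mxE //.
Qed.

Lemma trunc_entry n (lam : nat -> R) (E : 'M[R]_n) r i j :
  trunc_mx r lam E i j = \sum_(k < n | (k < r)%N) lam k * (E i k * E j k).
Proof.
rewrite /trunc_mx summxE; apply: eq_bigr => k _.
by rewrite mxE mxE big_ord1 !mxE.
Qed.
End Mx.
Section Quad.
Variable R : rcfType.

Lemma quad_entry n (A : 'M[R]_n) (a : 'I_n -> R) :
  \sum_i \sum_j a i * a j * A i j = ((\col_i a i)^T *m A *m (\col_i a i)) 0 0.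
Proof.
rewrite mxE exchange_big; apply: eq_bigr => j _.
rewrite !mxE mulr_suml; apply: eq_bigr => i _; rewrite !mxE; ring.
Qed.

Lemma quad_bound n (A E : 'M[R]_n) (lam : nat -> R) (a : 'I_n -> R) (n0 : 'I_n) :
  sorted_eigendecomp A lam E ->
  \sum_i \sum_j a i * a j * A i j <= lam 0%N * \sum_i a i ^+ 2.
Proof.
case=> HEE HAE Hs.
have EEt : E *m E^T = 1%:M by apply: mulmx1C.
have AE : A = E *m diag_mx (\row_(i < n) lam i) *m E^T.
  by rewrite -HAE -mulmxA EEt mulmx1.
rewrite quad_entry AE.
set av := \col_i a i; set D := diag_mx _.
have -> : av^T *m (E *m D *m E^T) *m av = (E^T *m av)^T *m D *m (E^T *m av).
  by rewrite trmx_mul trmxK !mulmxA.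
set b := E^T *m av.
have bb : \sum_i a i ^+ 2 = (b^T *m b) 0 0.
  rewrite /b trmx_mul trmxK mulmxA -[_ *m E^T]mulmxA EEt mulmx1 mxE.
  by apply: eq_bigr => i _; rewrite !mxE expr2.
rewrite bb mul_mx_diag !mxE mulr_sumr; apply: ler_sum => k _.
rewrite !mxE -mulrA mulrCA; apply: ler_wpM2r.
  by rewrite -expr2 sqr_ge0.
by apply: (Hs 0%N k); rewrite leq0n ltn_ord.
Qed.
End Quad.
Section Bessel.
Variables (R : rcfType) (X : Type) (kappa : X -> X -> R)
  (V : lmodType R) (ip : V -> V -> R) (Phi : X -> V).
Hypothesis Hip : inner_product ip.
Hypothesis HPhi : feature_map kappa ip Phi.

Lemma bessel n (x : 'I_n -> X) (lam : nat -> R) (E : 'M[R]_n) (n0 : 'I_n) g :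
  sorted_eigendecomp (gram kappa x x) lam E -> 0 <= lam 0%N ->
  \sum_i ip (Phi (x i)) g ^+ 2 <= lam 0%N * ip g g.
Proof.
move=> HE l0.
set a := fun i => ip (Phi (x i)) g.
set S := \sum_i ip (Phi (x i)) g ^+ 2.
set w := \sum_i a i *: Phi (x i).
have wg : ip w g = S.
  rewrite /w ipsum1 //; apply: eq_bigr => i _; by rewrite ipZ1 // expr2.
have ww : ip w w <= lam 0%N * S.
  apply: (le_trans _ (quad_bound a n0 HE)).
  rewrite le_eqVlt; apply/orP; left; apply/eqP.
  rewrite /w ipsum1 //; apply: eq_bigr => i _.
  rewrite ipZ1 // ipsum2 // mulr_sumr; apply: eq_bigr => j _.
  by rewrite ipZ2 // HPhi mxE mulrA.
have S0 : 0 <= S by apply: sumr_ge0 => i _; apply: sqr_ge0.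
have cs := CS Hip w g; rewrite wg in cs.
have cs2 : S ^+ 2 <= S * (lam 0%N * ip g g).
  apply: le_trans cs _; rewrite mulrA; apply: ler_wpM2r; first exact: ip_ge0.
  by rewrite mulrC.
have [->|Sn0] := eqVneq S 0; first by rewrite mulr_ge0 // ip_ge0.
have Sp : 0 < S by rewrite lt0r Sn0.
by move: cs2; rewrite expr2 ler_pM2l.
Qed.
End Bessel.

Unset Implicit Arguments.
Theorem theorem2 (R : rcfType) (X : Type) (kappa : X -> X -> R)
  (Hk : psd_kernel kappa) (Hk1 : forall x, kappa x x <= 1)
  (V : lmodType R) (ip : V -> V -> R) (Hip : inner_product ip)
  (Phi : X -> V) (HPhi : feature_map kappa ip Phi)
  (N : nat) (x : 'I_N -> X)
  (lam : nat -> R) (Vm : 'M[R]_N)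
  (HK : sorted_eigendecomp (gram kappa x x) lam Vm)
  (Hlam : forall i : 'I_N, 0 < lam i)
  (m : nat) (s : 'I_m -> 'I_N)
  (lamh : nat -> R) (Um : 'M[R]_m)
  (HKh : sorted_eigendecomp (gram kappa (x \o s) (x \o s)) lamh Um)
  (r : nat) (Hr1 : (1 <= r)%N) (Hrm : (r <= m)%N) (HrN : (r <= N)%N)
  (Hlamr : 0 < lam r.-1) (Hlamhr : 0 < lamh r.-1)
  (c : R)
  (Hc : is_op_norm ip
          (fun f => proj_op ip r (eigfun Phi x lam Vm) f
                    - proj_op ip r (eigfun Phi (x \o s) lamh Um) f) c) :
  let Kb := gram kappa x (x \o s) in
  let Khat_r := Kb *m pinv_trunc r lamh Um *m Kb^T in
  let K_r := trunc_mx r lam Vm in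
  frob_norm (Khat_r - K_r) <= Num.sqrt (lam 0%N * N%:R) * c
  /\ Num.sqrt (lam 0%N * N%:R) * c <= N%:R * c.
Proof.
move=> Kb Khat_r K_r.
have ksym : forall a b, kappa a b = kappa b a by case: Hk.
have N0 : (0 < N)%N by apply: leq_trans HrN.
pose n0 : 'I_N := Ordinal N0.
have l0 : 0 < lam 0%N by exact: (Hlam n0).
set P := proj_op ip r (eigfun Phi x lam Vm).
set Ph := proj_op ip r (eigfun Phi (x \o s) lamh Um).
set D := fun f => P f - Ph f.
have c0 : 0 <= c.
  case: Hc => H _; apply: le_trans (H 0 _); first exact: sqrtr_ge0.
  by rewrite /ipnorm ip01 // sqrtr0 ler01.
have Hg : forall j, ip (D (Phi (x j))) (D (Phi (x j))) <= c ^+ 2.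
  move=> j; case: Hc => H _.
  have := H (Phi (x j)); rewrite /ipnorm HPhi.
  have -> : Num.sqrt (kappa (x j) (x j)) <= 1.
    by rewrite -sqrtr1 ler_wsqrtr.
  move=> /(_ isT) h.
  rewrite -(sqr_sqrtr (ip_ge0 Hip _)); apply: lerXn2r; rewrite ?qualifE ?sqrtr_ge0 //; exact: sqrtr_ge0.
have Kh_e : forall i j, Khat_r i j = ip (Phi (x i)) (Ph (Phi (x j))).
  move=> i j; rewrite /Khat_r /pinv_trunc (sandwich_entry _ _ (fun k => (lamh k)^-1)) /Ph (proj_ip Hip HPhi) //.
    apply: eq_bigr => k _; congr (_ * (_ * _)); apply: eq_bigr => l _;
      by rewrite mulrC /Kb mxE /= ksym.
  move=> k kr; apply/ltW/(lt_le_trans Hlamhr).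
  case: HKh => _ _ Hs; apply: Hs; rewrite -ltnS prednK // kr /=.
  exact: Hrm.
have Kr_e : forall i j, K_r i j = ip (Phi (x i)) (P (Phi (x j))).
  have ev : forall a (k : 'I_N), \sum_l Vm l k * kappa (x l) (x a) = lam k * Vm a k.
    move=> a k0; case: HK => _ H _.
    have := congr1 (fun M : 'M[R]_N => M a k0) H; rewrite mul_mx_diag !mxE => h; rewrite mulrC -h.
    by apply: eq_bigr => l _; rewrite mxE mulrC ksym.
  move=> i j; rewrite /K_r trunc_entry /P (proj_ip Hip HPhi) //; last first.
    by move=> k _; apply/ltW/Hlam.
  apply: eq_bigr => k _; rewrite !ev.
  have := Hlam k; rewrite lt0r => /andP[lk _].
  by field.
have A_e : forall i j, (Khat_r - K_r) i j = - ip (Phi (x i)) (D (Phi (x j))).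
  move=> i j; have -> : (Khat_r - K_r) i j = Khat_r i j - K_r i j by rewrite !mxE.
  by rewrite Kh_e Kr_e /D ipB2 // opprB.
have sumb : \sum_(i < N) \sum_(j < N) (Khat_r - K_r) i j ^+ 2 <= lam 0%N * N%:R * c ^+ 2.
  under eq_bigr do under eq_bigr do rewrite A_e sqrrN.
  rewrite exchange_big /=.
  apply: (le_trans (y := \sum_(j < N) lam 0%N * c ^+ 2)).
    apply: ler_sum => j _. apply: le_trans (bessel Hip HPhi n0 _ HK (ltW l0)) _.
    by apply: ler_wpM2l; [exact: ltW | exact: Hg].
  rewrite sumr_const card_ord -mulr_natr le_eqVlt; apply/orP; left; apply/eqP; ring.
have tr : lam 0%N <= N%:R.
  have [HEE HAE _] := HK.
  have EEt : Vm *m Vm^T = 1%:M by apply: mulmx1C.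
  have t1 : \tr (gram kappa x x) <= N%:R.
    rewrite /mxtrace -[N in N%:R]card_ord -sumr_const; apply: ler_sum => i _.
    by rewrite mxE.
  have t2 : \tr (gram kappa x x) = \sum_(k < N) lam k.
    rewrite -[gram _ _ _]mulmx1 -EEt mulmxA HAE mxtrace_mulC mulmxA HEE mul1mx.
    by rewrite mxtrace_diag; apply: eq_bigr => k _; rewrite mxE.
  apply: le_trans t1; rewrite t2 (bigD1 n0) //= lerDl.
  by apply: sumr_ge0 => k _; apply/ltW/Hlam.
split.
  rewrite /frob_norm; apply: le_trans (ler_wsqrtr sumb) _.
  rewrite sqrtrM; last by rewrite mulr_ge0 // ltW.
  by rewrite sqrtr_sqr ger0_norm.
apply: ler_wpM2r => //.
have h : Num.sqrt (lam 0%N * N%:R) <= Num.sqrt (N%:R ^+ 2 : R).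
  by apply: ler_wsqrtr; rewrite expr2 ler_wpM2r.
by rewrite sqrtr_sqr ger0_norm in h.
Qed.
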